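(* In the MHAV setting described in the context, with $Y$, $f$, $\Lambda$ and $\phi_Y$ fixed, the diameter $D$ of $\bar P_{\mathrm{MH}}$ does not depend on the parameters $\alpha'\in(0,1)$ and $\alpha,\beta\in(0,1)$ with $\alpha+\beta<1$.
   Context: MHAV setting: $Y$ is a finite nonempty set, $f:Y\to\mathbb{R}$; $\Lambda=\{\lambda_1<\dots<\lambda_n\}$ positive reals, $n\ge2$; $\bar\Pi(\lambda,y)=\lambda^{-f(y)}/Z$ on $\Lambda\times Y$, $Z=\sum_{\lambda,y}\lambda^{-f(y)}$. $\phi_Y$ is an irreducible Markov kernel on $Y$. For $\alpha'\in(0,1)$: $\phi_\Lambda(\lambda_1,\lambda_2)=1$, $\phi_\Lambda(\lambda_n,\lambda_{n-1})=1$, and for $1<i<n$, $\phi_\Lambda(\lambda_i,\lambda_{i+1})=\alpha'$, $\phi_\Lambda(\lambda_i,\lambda_{i-1})=1-\alpha'$, other entries $0$. $\bar\phi[(\lambda,y),(\lambda',y')]=\alpha\phi_\Lambda(\lambda,\lambda')$ if $\lambda\ne\lambda',y=y'$; $\beta\phi_Y(y,y')$ if $\lambda=\lambda',y\ne y'$; $(1-\alpha-\beta)+\beta\phi_Y(y,y)$ if $(\lambda,y)=(\lambda',y')$; $0$ otherwise. $\bar{\mathsf{Acc}}(x,x')=\min\{1,\frac{\bar\phi(x',x)\bar\Pi(x')}{\bar\phi(x,x')\bar\Pi(x)}\}$; $\bar P_{\mathrm{MH}}(x,x')=\bar\phi(x,x')\bar{\mathsf{Acc}}(x,x')$ for $x\ne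 x'$, $\bar P_{\mathrm{MH}}(x,x)=1-\sum_{x'\ne x}\bar P_{\mathrm{MH}}(x,x')$. The diameter is $D=\min\{l:\ \bar P^l_{\mathrm{MH}}(x,x')>0\text{ for all }x,x'\in\Lambda\times Y\}$ (with $\bar P^l_{\mathrm{MH}}$ the $l$-step transition probabilities), understood as $+\infty$ if the set is empty. *)

(* Defs.v *)
From HB Require Import structures.
From mathcomp Require Import all_boot all_order all_algebra.
From mathcomp Require Import reals exp.
From Stdlib Require Import ClassicalEpsilon.
Set Implicit Arguments. Unset Strict Implicit. Unset Printing Implicit Defensive.
Import Order.TTheory GRing.Theory Num.Theory.
Local Open Scope ring_scope.

Section MHAV.
Variable R : realType.

Fixpoint kpow (X : finType) (P : X -> X -> R) (l : nat) (x x' : X) : R :=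
  match l with
  | 0 => (x == x')%:R
  | l.+1 => \sum_(z : X) kpow P l x z * P z x'
  end.

Definition markov_kernel (X : finType) (P : X -> X -> R) : Prop :=
  (forall x x', 0 <= P x x') /\ (forall x, \sum_(x' : X) P x x' = 1).

Definition irreducible (X : finType) (P : X -> X -> R) : Prop :=
  forall x x', exists l, 0 < kpow P l x x'.

(* diameter: least l such that all l-step probabilities are positive;
   None stands for +infinity (no such l). *)
Definition all_pos (X : finType) (P : X -> X -> R) (l : nat) : bool :=
  [forall x, [forall x', 0 < kpow P l x x']].

Definition diameter (X : finType) (P : X -> X -> R) : option nat :=
  match excluded_middle_informative (exists l, all_pos P l) with
  | left H => Some (ex_minn H)
  | right _ => None
  end.

(* Lambda = {lam_0 < ... < lam_{n-1}}, indexed by 'I_n *)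
Definition phiL (n : nat) (a' : R) (i j : 'I_n) : R :=
  if (i == 0%N :> nat) then ((j == 1%N :> nat)%:R)
  else if (i == n.-1 :> nat) then ((j == n.-2 :> nat)%:R)
  else if (j == i.+1 :> nat) then a'
  else if (j.+1 == i :> nat) then 1 - a'
  else 0.

Variables (Y : finType) (f : Y -> R) (n : nat) (lam : 'I_n -> R)
          (phiY : Y -> Y -> R).

Definition Zc : R := \sum_(i : 'I_n) \sum_(y : Y) powR (lam i) (- f y).

Definition Pibar (x : 'I_n * Y) : R := powR (lam x.1) (- f x.2) / Zc.

Definition phibar (a' al be : R) (x x' : 'I_n * Y) : R :=
  if (x.1 != x'.1) && (x.2 == x'.2) then al * phiL a' x.1 x'.1
  else if (x.1 == x'.1) && (x.2 != x'.2) then be * phiY x.2 x'.2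
  else if x == x' then (1 - al - be) + be * phiY x.2 x.2
  else 0.

Definition Acc (a' al be : R) (x x' : 'I_n * Y) : R :=
  Num.min 1 ((phibar a' al be x' x * Pibar x') / (phibar a' al be x x' * Pibar x)).

Definition PMH (a' al be : R) (x x' : 'I_n * Y) : R :=
  if x != x' then phibar a' al be x x' * Acc a' al be x x'
  else 1 - \sum_(z : 'I_n * Y | z != x) phibar a' al be x z * Acc a' al be x z.

End MHAV.

(* Main.v *)
Require Import Defs.
From HB Require Import structures.
From mathcomp Require Import all_boot all_order all_algebra.
From mathcomp Require Import reals exp.
From Stdlib Require Import FunctionalExtensionality.
Set Implicit Arguments. Unset Strict Implicit.
Import Order.TTheory GRing.Theory Num.Theory.
Local Open Scope ring_scope.


Lemma phiL_ge0 (R : realType) n (a : R) (i j : 'I_n) : 0 < a < 1 -> 0 <= phiL a i j.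
Proof.
case/andP=> a0 a1; rewrite /phiL.
repeat case: ifP => _ //; rewrite ?ler0n ?subr_ge0 ?ltW //.
Qed.

Lemma phiL_pat (R : realType) n (a b : R) (i j : 'I_n) : 0 < a < 1 -> 0 < b < 1 ->
  (0 < phiL a i j) = (0 < phiL b i j).
Proof.
case/andP=> a0 a1; case/andP=> b0 b1; rewrite /phiL.
by repeat case: ifP => _ //; rewrite ?subr_gt0 ?a0 ?a1 ?b0 ?b1.
Qed.

Lemma sum_ind (R : realType) n (k : nat) :
  \sum_(j < n) (((j : nat) == k)%:R : R) <= 1.
Proof.
case: (ltnP k n) => Hk.
  rewrite (bigD1 (Ordinal Hk)) //= eqxx big1 ?addr0 //.
  move=> j Hj; case: eqP => // E; exfalso; move/eqP: Hj; apply.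
  by apply: val_inj.
rewrite big1 ?ler01 // => j _; case: eqP => // E.
by move: (ltn_ord j); rewrite E ltnNge Hk.
Qed.

Lemma phiL_sum (R : realType) n (a : R) (i : 'I_n) : 0 < a < 1 ->
  \sum_(j < n) phiL a i j <= 1.
Proof.
move=> Ha; rewrite /phiL.
case: (boolP ((i:nat) == 0%N)) => K0; first exact: sum_ind.
case: (boolP ((i:nat) == n.-1)) => K1; first exact: sum_ind.
case/andP: Ha => a0 a1.
apply: (@le_trans _ _ (\sum_(j < n) (a * ((j:nat) == i.+1)%:R + (1 - a) * ((j:nat) == i.-1)%:R))).
  apply: ler_sum => j _.
  case: ifP => /eqP H1.
    by rewrite mulr1 lerDl mulr_ge0 ?subr_ge0 ?ler0n ?(ltW a1) ?(ltW a0).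
  case: ifP => /eqP H2.
    have -> : (j : nat) == i.-1 by rewrite -H2.
    by rewrite mulr1 mulr0 add0r.
  by rewrite mulr0 add0r mulr_ge0 ?subr_ge0 ?ler0n ?(ltW a1) ?(ltW a0).
rewrite big_split /= -!mulr_sumr.
rewrite -[X in _ <= X](subrK a 1) addrC lerD // ler_piMr ?subr_ge0 ?sum_ind //. by rewrite ltW. by rewrite ltW.
Qed.

Lemma mul_pos_iff (R : realType) (a b : R) : 0 <= a -> 0 <= b ->
  (0 < a * b) = (0 < a) && (0 < b).
Proof.
move=> ha hb; case: (ltrP 0 a) => H /=; first by rewrite pmulr_rgt0.
have -> : a = 0 by apply/eqP; rewrite eq_le H ha.
by rewrite mul0r ltxx.
Qed.


Definition goodp (R : realType) (a al be : R) :=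
  [&& 0 < a, a < 1, 0 < al, 0 < be & al + be < 1].

Lemma phibar_ge0 (R : realType) (Y : finType) n (phiY : Y -> Y -> R) (a al be : R)
  (x x' : 'I_n * Y) : goodp a al be -> markov_kernel phiY ->
  0 <= phibar phiY a al be x x'.
Proof.
case/and5P=> a0 a1 al0 be0 s1 [HY _]; rewrite /phibar.
case: ifP => _; first by apply: mulr_ge0; [exact: ltW | apply: phiL_ge0; rewrite a0].
case: ifP => _; first by apply: mulr_ge0; [exact: ltW | exact: HY].
case: ifP => _ //.
apply: addr_ge0; last by apply: mulr_ge0; [exact: ltW | exact: HY].
by rewrite -addrA -opprD subr_ge0 ltW.
Qed.

Lemma phibar_pat (R : realType) (Y : finType) n (phiY : Y -> Y -> R) (a al be : R)
  (a2 al2 be2 : R) (x x' : 'I_n * Y) : goodp a al be -> goodp a2 al2 be2 -> x != x' ->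
  (0 < phibar phiY a al be x x') = (0 < phibar phiY a2 al2 be2 x x').
Proof.
case/and5P=> a0 a1 al0 be0 s1; case/and5P=> b0 b1 al20 be20 s2 Hx.
rewrite /phibar (negbTE Hx).
case: ifP => _; first by rewrite !pmulr_rgt0 //; apply: phiL_pat; rewrite ?a0 ?b0.
case: ifP => _; first by rewrite !pmulr_rgt0.
by [].
Qed.

Lemma Zc_gt0 (R : realType) (Y : finType) (f : Y -> R) n (lam : 'I_n -> R) :
  (0 < #|Y|)%N -> (0 < n)%N -> (forall i, 0 < lam i) -> 0 < Zc f lam.
Proof.
move=> HY Hn Hl; rewrite /Zc.
case/card_gt0P: HY => y _.
pose i0 : 'I_n := Ordinal Hn.
rewrite (bigD1 i0) //= (bigD1 y) //=.
apply: ltr_wpDr; first by apply: sumr_ge0 => i _; apply: sumr_ge0 => z _; apply/ltW/powR_gt0.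
apply: ltr_wpDr; first by apply: sumr_ge0 => z _; apply/ltW/powR_gt0.
exact: powR_gt0.
Qed.

Lemma Pibar_gt0 (R : realType) (Y : finType) (f : Y -> R) n (lam : 'I_n -> R) x :
  (0 < #|Y|)%N -> (0 < n)%N -> (forall i, 0 < lam i) -> 0 < Pibar f lam x.
Proof.
move=> HY Hn Hl; rewrite /Pibar divr_gt0 ?powR_gt0 //; exact: Zc_gt0.
Qed.


Section S.
Context (R : realType) (Y : finType) (f : Y -> R) (n : nat) (lam : 'I_n -> R)
  (phiY : Y -> Y -> R) (HY : (0 < #|Y|)%N) (Hn : (2 <= n)%N)
  (Hl : forall i, 0 < lam i) (HK : markov_kernel phiY) (a al be : R)
  (Hg : goodp a al be).

Let Hn0 : (0 < n)%N. Proof. by apply: leq_trans Hn. Qed.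

Lemma Acc_ge0 x x' : 0 <= Acc f lam phiY a al be x x'.
Proof.
rewrite /Acc le_min ler01 /=.
apply: divr_ge0; apply: mulr_ge0; rewrite ?phibar_ge0 //; apply: ltW; exact: Pibar_gt0.
Qed.

Lemma Acc_le1 x x' : Acc f lam phiY a al be x x' <= 1.
Proof. by rewrite /Acc ge_min lexx. Qed.

Lemma PMH_off x x' : x != x' ->
  (0 < PMH f lam phiY a al be x x') =
  (0 < phibar phiY a al be x x') && (0 < phibar phiY a al be x' x).
Proof.
move=> Hx; rewrite /PMH Hx mul_pos_iff ?Acc_ge0 ?phibar_ge0 //.
case: (ltrP 0 (phibar phiY a al be x x')) => H //=.
rewrite /Acc lt_min ltr01 /= pmulr_lgt0 ?invr_gt0 ?pmulr_lgt0 //.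
all: rewrite ?invr_gt0 ?powR_gt0 //; exact: Zc_gt0.
Qed.

Lemma PMH_off_ge0 x x' : x != x' -> 0 <= PMH f lam phiY a al be x x'.
Proof. by move=> Hx; rewrite /PMH Hx mulr_ge0 ?Acc_ge0 ?phibar_ge0. Qed.

Lemma PMH_diag x : 0 < PMH f lam phiY a al be x x.
Proof.
rewrite /PMH eqxx /= subr_gt0.
move: Hg => /and5P [a0 a1 al0 be0 s1].
case: HK => HY0 HY1.
pose g (z : 'I_n * Y) : R :=
  (if z.2 == x.2 then al * phiL a x.1 z.1 else 0) +
  (if z.1 == x.1 then be * phiY x.2 z.2 else 0).
have g0 z : 0 <= g z.
  rewrite /g; apply: addr_ge0; case: ifP => _ //; apply: mulr_ge0;
  try exact: ltW; try exact: HY0; by apply: phiL_ge0; rewrite a0.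
apply: (@le_lt_trans _ _ (\sum_z g z)); last first.
  have -> : \sum_z g z = \sum_i \sum_j g (i, j).
    by rewrite pair_big /=; apply: eq_bigr => -[].
  rewrite /g /=.
  under eq_bigr => i _ do rewrite big_split /=.
  rewrite big_split /= [X in _ + X](exchange_big) /=.
  under eq_bigr => i _ do rewrite -big_mkcond /= big_pred1_eq.
  under [X in _ + X]eq_bigr => j _ do rewrite -big_mkcond /= big_pred1_eq.
  rewrite -!mulr_sumr HY1 mulr1.
  apply: (@le_lt_trans _ _ (al + be)) => //.
  rewrite lerD2r; apply: ler_piMr; [exact: ltW | apply: phiL_sum; rewrite a0 a1].
  by [].
rewrite big_mkcond /=; apply: ler_sum => z _.
case: ifP => Hz; last exact: g0.
apply: (@le_trans _ _ (phibar phiY a al be x z)).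
  rewrite ler_piMr ?phibar_ge0 ?Acc_le1 //.
have Hxz : (x == z) = false by rewrite eq_sym; apply/negbTE; rewrite Hz.
rewrite /phibar /g Hxz.
case: ifP => /andP.
  by case=> H1 H2; rewrite (eq_sym z.2) H2 (eq_sym z.1) (negbTE H1) addr0.
move=> _; case: ifP => /andP; last by move=> _; apply: g0.
by case=> H1 H2; rewrite (eq_sym z.1) H1 (eq_sym z.2) (negbTE H2) add0r.
Qed.
End S.


Lemma pos_eq0 (R : realType) (a b : R) : 0 <= a -> 0 <= b ->
  (0 < a) = (0 < b) -> (a == 0) = (b == 0).
Proof. by move=> ha hb; rewrite !lt0r ha hb !andbT => /negb_inj. Qed.



Lemma kpow_ge0 (R : realType) (X : finType) (P : X -> X -> R) :
  (forall x y, 0 <= P x y) -> forall l x y, 0 <= kpow P l x y.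
Proof.
move=> HP; elim=> [|l IH] x y /=; first by rewrite ler0n.
by apply: sumr_ge0 => z _; apply: mulr_ge0.
Qed.

Lemma kpow_pat (R : realType) (X : finType) (P Q : X -> X -> R) :
  (forall x y, 0 <= P x y) -> (forall x y, 0 <= Q x y) ->
  (forall x y, (0 < P x y) = (0 < Q x y)) ->
  forall l x y, (0 < kpow P l x y) = (0 < kpow Q l x y).
Proof.
move=> HP HQ E; elim=> [|l IH] x y //=.
have gP z : 0 <= kpow P l x z * P z y by apply: mulr_ge0 => //; apply: kpow_ge0.
have gQ z : 0 <= kpow Q l x z * Q z y by apply: mulr_ge0 => //; apply: kpow_ge0.
rewrite !lt0r !sumr_ge0 // !andbT; congr negb.
rewrite !psumr_eq0 //; apply: eq_all => z /=.
apply: pos_eq0 => //.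
by rewrite !mul_pos_iff ?kpow_ge0 // IH E.
Qed.

Lemma diam_pat (R : realType) (X : finType) (P Q : X -> X -> R) :
  (forall x y, 0 <= P x y) -> (forall x y, 0 <= Q x y) ->
  (forall x y, (0 < P x y) = (0 < Q x y)) -> diameter P = diameter Q.
Proof.
move=> HP HQ E.
have Ea : all_pos P = all_pos Q.
  apply: functional_extensionality => l; rewrite /all_pos.
  apply: eq_forallb => x; apply: eq_forallb => y; exact: kpow_pat.
by rewrite /diameter Ea.
Qed.

Theorem lemma17 (R : realType) (Y : finType) (f : Y -> R) (n : nat)
  (lam : 'I_n -> R) (phiY : Y -> Y -> R) :
  (0 < #|Y|)%N -> (2 <= n)%N ->
  (forall i, 0 < lam i) -> (forall i j : 'I_n, (i < j)%N -> lam i < lam j) ->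
  markov_kernel phiY -> irreducible phiY ->
  forall a1' al1 be1 a2' al2 be2 : R,
    0 < a1' < 1 -> 0 < al1 < 1 -> 0 < be1 < 1 -> al1 + be1 < 1 ->
    0 < a2' < 1 -> 0 < al2 < 1 -> 0 < be2 < 1 -> al2 + be2 < 1 ->
    diameter (PMH f lam phiY a1' al1 be1) = diameter (PMH f lam phiY a2' al2 be2).
Proof.
move=> HY Hn Hl _ HK _ a1 al1 be1 a2 al2 be2 /andP[a10 a11] /andP[al10 _]
  /andP[be10 _] s1 /andP[a20 a21] /andP[al20 _] /andP[be20 _] s2.
have g1 : goodp a1 al1 be1 by apply/and5P.
have g2 : goodp a2 al2 be2 by apply/and5P.
have ge p1 p2 p3 (g : goodp p1 p2 p3) x y : 0 <= PMH f lam phiY p1 p2 p3 x y.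
  case: (eqVneq x y) => [<-|Hxy]; first exact/ltW/PMH_diag.
  exact: PMH_off_ge0.
apply: diam_pat; [exact: ge | exact: ge |] => x y.
case: (eqVneq x y) => [<-|Hxy]; first by rewrite !PMH_diag.
rewrite !PMH_off //; congr andb; apply: phibar_pat => //; by rewrite eq_sym.
Qed.
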